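(* Let $M$ be a magma satisfying $(xy)z = xy$ and $x(yz) = xy$ for all $x,y,z\in M$. Then $M$ satisfies $xy = xz$ and $(xy)z = xy$ for all $x,y,z\in M$ if and only if $M$ avoids the magma $P$ on $\{0,1,2,3\}$ with Cayley table \[ \begin{array}{c|cccc} P & 0 & 1 & 2 & 3 \\ \hline 0 & 2 & 3 & 2 & 2 \\ 1 & 1 & 1 & 1 & 1 \\ 2 & 2 & 2 & 2 & 2 \\ 3 & 3 & 3 & 3 & 3 \end{array}. \]
   Context: A magma is a nonempty set with a binary operation, written by juxtaposition. A magma $M$ avoids a magma $F$ if no submagma of $M$ is isomorphic to $F$. In the Cayley table, the entry in row $i$, column $j$ is $i\cdot j$. *)

(* Defs.v *)
From mathcomp Require Import all_boot.
Set Implicit Arguments. Unset Strict Implicit. Unset Printing Implicit Defensive.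

Record magma := Magma { carrier :> Type; op : carrier -> carrier -> carrier;
                        inhab : carrier }.

Definition submagma (M : magma) (S : carrier M -> Prop) : Prop :=
  (exists x, S x) /\ forall x y, S x -> S y -> S (op x y).

Definition sub_iso (F M : magma) (S : carrier M -> Prop) : Prop :=
  exists f : carrier F -> carrier M,
    (forall a, S (f a)) /\
    (forall a b, f a = f b -> a = b) /\
    (forall y, S y -> exists a, f a = y) /\
    (forall a b, f (op a b) = op (f a) (f b)).

Definition avoids (M F : magma) : Prop :=
  ~ exists S : carrier M -> Prop, submagma S /\ sub_iso F S.

Definition P_table (i j : 'I_4) : 'I_4 :=
  match val i, val j with
  | 0, 1 => inord 3
  | 0, _ => inord 2
  | 1, _ => inord 1
  | 2, _ => inord 2
  | _, _ => inord 3
  end.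

Definition P : magma := Magma P_table ord0.

(* Main.v *)
From Stdlib Require Import Classical.
Require Import Defs.
From mathcomp Require Import all_boot.

Section H.
Variable M : magma.
Hypothesis h1 : forall x y z : M, op (op x y) z = op x y.
Hypothesis h2 : forall x y z : M, op x (op y z) = op x y.

Lemma helper (a b : M) : avoids M P -> op a a = op a b.
Proof.
move=> Hav; apply: NNPP => Hne; apply: Hav.
pose g (n : nat) : M := match n with 0 => a | 1 => op b b | 2 => op a a | _ => op a b end.
pose f (i : 'I_4) : M := g (nat_of_ord i).
have fI : forall k, k < 4 -> f (inord k) = g k.
  by move=> k Hk; rewrite /f inordK.
have e01 : a <> op b b by move=> E; apply: Hne; rewrite {2}E h2.
have e02 : a <> op a a by move=> E; apply: Hne; have H := h1 a a b; rewrite -E in H; rewrite H -E.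
have e03 : a <> op a b by move=> E; apply: Hne; have H := h1 a b a; rewrite -E in H; rewrite H -E.
have e12 : op b b <> op a a by move=> E; apply: Hne; have H := h2 a b b; rewrite E h2 in H.
have e13 : op b b <> op a b by move=> E; apply: Hne; have H := h2 a b b; rewrite E h2 in H.
have e23 : op a a <> op a b by [].
exists (fun y => exists i, f i = y); split.
  split; first by exists a, ord0.
  move=> x y [i <-] [j <-].
  exists (inord (val (P_table i j))).
  case: i => [[|[|[|[|i]]]] Hi] //; case: j => [[|[|[|[|j]]]] Hj] //;
    rewrite /P_table /= ?inordK //= /f /g /= ?inordK //= ?h1 ?h2 //.
exists f; split; first by move=> i; exists i.
split.
  case=> [[|[|[|[|i]]]] Hi] //; case=> [[|[|[|[|j]]]] Hj] //; rewrite /f /g /= => E;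
    try (by apply/val_inj); exfalso;
    by [apply: e01|apply: e02|apply: e03|apply: e12|apply: e13|apply: e23|
        apply: e01; symmetry|apply: e02; symmetry|apply: e03; symmetry|
        apply: e12; symmetry|apply: e13; symmetry|apply: e23; symmetry].
split; first by move=> y [i <-]; exists i.
case=> [[|[|[|[|i]]]] Hi] //; case=> [[|[|[|[|j]]]] Hj] //;
  rewrite /P_table /= ?inordK //= /f /g /= ?inordK //= ?h1 ?h2 //.
Qed.
End H.

Theorem mainTheorem15 (M : magma) :
  (forall x y z : M, op (op x y) z = op x y) ->
  (forall x y z : M, op x (op y z) = op x y) ->
  ((forall x y z : M, op x y = op x z /\ op (op x y) z = op x y) <-> avoids M P).
Proof.
move=> h1 h2; split.
  move=> H [S [_ [f [_ [inj [_ hom]]]]]].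
  have E : f (P_table ord0 ord0) = f (P_table ord0 (inord 1)).
    by rewrite (hom ord0 ord0) (hom ord0 (inord 1)); case: (H (f ord0) (f ord0) (f (inord 1))).
  by move/inj/(congr1 val): E; rewrite /P_table /= !inordK.
move=> Hav x y z; split; last exact: h1.
by rewrite -(@helper M h1 h2 x y Hav) (@helper M h1 h2 x z Hav).
Qed.
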